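(* For every $f:\{0,1\}^n\to\{0,1\}$ and all sets $J\subseteq K\subseteq[n]$, $\mathrm{SymInf}_f(J)\le\mathrm{SymInf}_f(K)$.
   Context: $\mathcal{S}_J$ is the set of permutations of $[n]$ fixing every element outside $J$; $\pi x$ is the vector whose $\pi(i)$-th coordinate is $x_i$. $\mathrm{SymInf}_f(J)=\Pr_{x,\pi}[f(x)\ne f(\pi x)]$ with $x$ uniform in $\{0,1\}^n$ and $\pi$ uniform in $\mathcal{S}_J$. *)

(* Defs.v *)
From mathcomp Require Import all_boot all_order all_fingroup all_algebra.
Set Implicit Arguments. Unset Strict Implicit. Unset Printing Implicit Defensive.
Import GRing.Theory Num.Theory.

Definition cube (n : nat) := {ffun 'I_n -> bool}.

Definition SymGroup (n : nat) (J : {set 'I_n}) : {set {perm 'I_n}} :=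
  [set s : {perm 'I_n} | perm_on J s].

(* pi x : the vector whose pi(i)-th coordinate is x_i, i.e. (pi x)_j = x_{pi^-1 j}. *)
Definition perm_act (n : nat) (s : {perm 'I_n}) (x : cube n) : cube n :=
  [ffun j => x ((s^-1)%g j)].

Definition SymInf (n : nat) (f : cube n -> bool) (J : {set 'I_n}) : rat :=
  (#|[set p : cube n * {perm 'I_n} |
        (p.2 \in SymGroup J) && (f p.1 != f (perm_act p.2 p.1))]|%:R
   / (#|[set: cube n]| * #|SymGroup J|)%:R)%R.

(* Main.v *)
Require Import Defs.
From mathcomp Require Import all_boot all_order all_fingroup all_algebra.
From mathcomp Require Import ring lra.
Import Order.TTheory GRing.Theory Num.Theory.
Local Open Scope ring_scope.

Lemma cauchy (I : finType) (A : pred I) (u : I -> rat) :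
  (\sum_(i in A) u i) ^+ 2 <= #|A|%:R * \sum_(i in A) u i ^+ 2.
Proof.
have H : 0 <= \sum_(i in A) \sum_(j in A) (u i - u j) ^+ 2.
  by apply: sumr_ge0 => i _; apply: sumr_ge0 => j _; apply: sqr_ge0.
have E1 : \sum_(i in A) \sum_(j in A) u i ^+ 2 = #|A|%:R * \sum_(i in A) u i ^+ 2.
  by under eq_bigr => i _ do rewrite sumr_const -mulr_natl; rewrite -mulr_sumr.
have E2 : \sum_(i in A) \sum_(j in A) u j ^+ 2 = #|A|%:R * \sum_(i in A) u i ^+ 2.
  by rewrite sumr_const mulr_natl.
have E3 : \sum_(i in A) \sum_(j in A) (u i * u j) = (\sum_(i in A) u i) ^+ 2.
  rewrite expr2 mulr_suml; apply: eq_bigr => i _; by rewrite mulr_sumr.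
have E : \sum_(i in A) \sum_(j in A) (u i - u j) ^+ 2 =
  \sum_(i in A) \sum_(j in A) u i ^+ 2 + \sum_(i in A) \sum_(j in A) u j ^+ 2
  - 2 * \sum_(i in A) \sum_(j in A) (u i * u j).
  rewrite mulr_sumr -big_split -sumrB; apply: eq_bigr => i _.
  rewrite mulr_sumr -big_split -sumrB; apply: eq_bigr => j _.
  rewrite sqrrB /=; ring.
move: H; rewrite E E1 E2 E3 => H; lra.
Qed.

Section S.
Variable n : nat.
Variable f : cube n -> bool.

Lemma actM (s t : {perm 'I_n}) x :
  perm_act t (perm_act s x) = perm_act (s * t)%g x.
Proof. by apply/ffunP => j; rewrite !ffunE invMg permM. Qed.

Lemma act1 x : perm_act (1%g : {perm 'I_n}) x = x.
Proof. by apply/ffunP => j; rewrite !ffunE invg1 perm1. Qed.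

Lemma act_inj (s : {perm 'I_n}) : injective (perm_act s).
Proof.
move=> x y e; rewrite -[x]act1 -[y]act1 -(mulgV s) -!actM.
by rewrite e.
Qed.

Definition Fs (x : cube n) : rat := if f x then 1 else -1.

Lemma neqF a b : ((f a != f b)%:R : rat) = (1 - Fs a * Fs b) / 2.
Proof. by rewrite /Fs; case: (f a); case: (f b) => /=; field. Qed.

Definition a (G : {set {perm 'I_n}}) x := \sum_(g in G) Fs (perm_act g x).
Definition T G := \sum_x (a G x) ^+ 2.
Definition Sm (G : {set {perm 'I_n}}) :=
  \sum_x \sum_(g in G) Fs x * Fs (perm_act g x).

Lemma cardD (G : {set {perm 'I_n}}) :
  (#|[set p : cube n * {perm 'I_n} |
        (p.2 \in G) && (f p.1 != f (perm_act p.2 p.1))]|%:R : rat)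
  = \sum_x \sum_(g in G) ((f x != f (perm_act g x))%:R).
Proof.
rewrite -sum1_card natr_sum pair_big /= [RHS]big_mkcond [LHS]big_mkcond /=.
apply: eq_bigr => p _; rewrite inE.
by case: (p.2 \in G); case: (f _ != f _).
Qed.

Lemma inG (J : {set 'I_n}) (g h : {perm 'I_n}) : g \in SymGroup J ->
  ((g * h)%g \in SymGroup J) = (h \in SymGroup J).
Proof.
rewrite !inE => gJ; apply/idP/idP => hJ; last exact: perm_onM.
by rewrite -(mulKg g h); apply: perm_onM => //; apply: perm_onV.
Qed.

Lemma inG' (J : {set 'I_n}) (g h : {perm 'I_n}) : g \in SymGroup J ->
  ((h * g^-1)%g \in SymGroup J) = (h \in SymGroup J).
Proof.
rewrite !inE => gJ; apply/idP/idP => hJ; last by apply: perm_onM => //; apply: perm_onV.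
by rewrite -(mulgKV g h); apply: perm_onM.
Qed.

Lemma TS (J : {set 'I_n}) : T (SymGroup J) = #|SymGroup J|%:R * Sm (SymGroup J).
Proof.
rewrite /T /a.
under eq_bigr => x _ do rewrite expr2 mulr_suml.
rewrite exchange_big /= mulr_natl -sumr_const.
apply: eq_bigr => g1 g1J.
rewrite (reindex_inj (act_inj g1^-1)) /Sm.
apply: eq_bigr => y _; rewrite mulr_sumr.
rewrite actM mulVg act1.
rewrite (reindex_inj (@mulgI _ g1)) /=.
rewrite (eq_bigl (fun g => g \in SymGroup J)); last by move=> g; rewrite inG.
apply: eq_bigr => g _; by rewrite actM mulgA mulVg mul1g.
Qed.


Lemma avg (J K : {set 'I_n}) x : J \subset K ->
  #|SymGroup J|%:R * a (SymGroup K) x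
  = \sum_(h in SymGroup K) a (SymGroup J) (perm_act h x).
Proof.
move=> JK; rewrite /a mulr_natl -sumr_const.
under [RHS]eq_bigr => h _ do under eq_bigr => g _ do rewrite actM.
rewrite [RHS]exchange_big /=; apply: eq_bigr => g gJ.
have gK : g \in SymGroup K.
  by move: gJ; rewrite !inE => /subset_trans; apply.
symmetry; rewrite (reindex_inj (@mulIg _ (g^-1)%g)) /=.
rewrite (eq_bigl (fun h => h \in SymGroup K)); last by move=> h; rewrite inG'.
by apply: eq_bigr => h _ /=; rewrite -mulgA mulVg mulg1.
Qed.

Lemma SymInfE (J : {set 'I_n}) :
  SymInf f J =
  (1 - T (SymGroup J) / (#|[set: cube n]|%:R * #|SymGroup J|%:R ^+ 2)) / 2.
Proof.
rewrite /SymInf cardD.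
under eq_bigr => x _ do under eq_bigr => g _ do rewrite neqF.
under eq_bigr => x _ do rewrite -mulr_suml sumrB sumr_const.
rewrite -mulr_suml sumrB.
rewrite (eq_bigl (fun i => i \in [set: cube n])); last by move=> ?; rewrite inE.
rewrite sumr_const -/(Sm _).
have gP : (#|SymGroup J|%:R : rat) != 0.
  rewrite pnatr_eq0 -lt0n; apply/card_gt0P; exists 1%g; rewrite inE; exact: perm_on1.
have NP : (#|[set: cube n]|%:R : rat) != 0.
  rewrite pnatr_eq0 -lt0n; apply/card_gt0P; exists [ffun=> false]; rewrite inE.
  done.
have -> : Sm (SymGroup J) = T (SymGroup J) / #|SymGroup J|%:R.
  by rewrite TS [_ * Sm _]mulrC mulfK.
rewrite natrM -mulr_natr.
by field; rewrite gP NP.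
Qed.

Lemma mainineq (J K : {set 'I_n}) : J \subset K ->
  #|SymGroup J|%:R ^+ 2 * T (SymGroup K) <=
  #|SymGroup K|%:R ^+ 2 * T (SymGroup J).
Proof.
move=> JK.
have R h : \sum_x a (SymGroup J) (perm_act h x) ^+ 2 = T (SymGroup J).
  by rewrite /T [RHS](reindex_inj (act_inj h)).
rewrite /T mulr_sumr.
under eq_bigr => x _ do rewrite -exprMn avg //.
apply: (@le_trans _ _ (\sum_x #|SymGroup K|%:R *
     \sum_(h in SymGroup K) (a (SymGroup J) (perm_act h x))^+2)).
  by apply: ler_sum => x _; apply: cauchy.
rewrite -mulr_sumr exchange_big /=.
under eq_bigr => h _ do rewrite R.
by rewrite sumr_const -/(T (SymGroup J)) -[T _ *+ _]mulr_natr expr2 [T _ * _]mulrC mulrA.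
Qed.

End S.

Theorem lemma4 (n : nat) (f : cube n -> bool) (J K : {set 'I_n}) :
  J \subset K -> (SymInf f J <= SymInf f K)%R.
Proof.
move=> JK; rewrite !SymInfE.
have H := @mainineq n f J K JK.
set tJ := T _ f (SymGroup J) in H *; set tK := T _ f (SymGroup K) in H *.
set j := (#|SymGroup J|%:R : rat) in H *; set k := (#|SymGroup K|%:R : rat) in H *.
set N := (#|[set: cube n]|%:R : rat).
have jP : 0 < j by rewrite ltr0n; apply/card_gt0P; exists 1%g; rewrite inE; exact: perm_on1.
have kP : 0 < k by rewrite ltr0n; apply/card_gt0P; exists 1%g; rewrite inE; exact: perm_on1.
have NP : 0 < N by rewrite ltr0n; apply/card_gt0P; exists [ffun=> false]; rewrite inE.
rewrite ler_pM2r ?invr_gt0 // lerD2l lerN2.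
rewrite ler_pdivrMr ?mulr_gt0 ?exprn_gt0 // mulrAC ler_pdivlMr ?mulr_gt0 ?exprn_gt0 //.
have -> : tK * (N * j ^+ 2) = N * (j ^+ 2 * tK) by ring.
have -> : tJ * (N * k ^+ 2) = N * (k ^+ 2 * tJ) by ring.
by rewrite ler_pM2l.
Qed.
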